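(* Let $h\geq 3$. If there exists a $(K_2,S(C_h))$-URD$(v;r,s)$ with $s>0$, then $v\equiv 0\pmod{2h}$ and $s\equiv 0\pmod 2$.
   Context: For $h\geq 3$, an $h$-sun is the graph on $2h$ distinct vertices $a_1,\ldots,a_h,b_1,\ldots,b_h$ consisting of the $h$-cycle $(a_1,a_2,\ldots,a_h)$ together with the edges $\{a_i,b_i\}$, $i=1,\ldots,h$. A $(K_2,S(C_h))$-URD$(v;r,s)$ is a partition of the edge set of the complete graph $K_v$ into $r$ classes each of which is a 1-factor (perfect matching) of $K_v$, and $s$ classes each of which is a set of vertex-disjoint $h$-suns covering every vertex of $K_v$ exactly once. *)

(* Defs.v *)
From mathcomp Require Import all_boot.
Set Implicit Arguments. Unset Strict Implicit. Unset Printing Implicit Defensive.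

Definition edgesK (v : nat) : {set {set 'I_v}} := [set e : {set 'I_v} | #|e| == 2].

Definition one_factor (v : nat) (F : {set {set 'I_v}}) : Prop :=
  F \subset edgesK v /\ forall x : 'I_v, #|[set e in F | x \in e]| = 1.

(* An h-sun with cycle vertices a_0..a_{h-1} (cycle (a_0,...,a_{h-1}))
   and pendant vertices b_0..b_{h-1}, all 2h vertices distinct. *)
Definition sun_ok (h v : nat) (a b : 'I_h -> 'I_v) : Prop :=
  injective a /\ injective b /\ forall i j, a i != b j.

Definition sun_vertices (h v : nat) (a b : 'I_h -> 'I_v) : {set 'I_v} :=
  [set a i | i : 'I_h] :|: [set b i | i : 'I_h].

Definition sun_edges (h v : nat) (a b : 'I_h -> 'I_v) : {set {set 'I_v}} :=
  [set [set a i; a (ordS i)] | i : 'I_h] :|: [set [set a i; b i] | i : 'I_h].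

Definition sun_factor (h v : nat) (C : {set {set 'I_v}}) : Prop :=
  exists (k : nat) (a b : 'I_k -> 'I_h -> 'I_v),
    (forall j, sun_ok (a j) (b j)) /\
    (forall j1 j2, j1 != j2 -> [disjoint sun_vertices (a j1) (b j1) & sun_vertices (a j2) (b j2)]) /\
    (forall x : 'I_v, exists j, x \in sun_vertices (a j) (b j)) /\
    C = \bigcup_(j < k) sun_edges (a j) (b j).

(* (K_2, S(C_h))-URD(v; r, s): a partition of the edge set of K_v into
   r classes that are 1-factors and s classes that are sun-factors.
   Classes of a partition are nonempty and pairwise disjoint. *)
Definition URD (h v r s : nat) : Prop :=
  exists (F : 'I_r -> {set {set 'I_v}}) (S : 'I_s -> {set {set 'I_v}}),
    (forall i, one_factor (F i)) /\
    (forall j, sun_factor h (S j)) /\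
    (forall i, F i != set0) /\ (forall j, S j != set0) /\
    (forall i1 i2, i1 != i2 -> [disjoint F i1 & F i2]) /\
    (forall j1 j2, j1 != j2 -> [disjoint S j1 & S j2]) /\
    (forall i j, [disjoint F i & S j]) /\
    (\bigcup_(i < r) F i) :|: (\bigcup_(j < s) S j) = edgesK v.

(* Main.v *)
Require Import Defs.
From mathcomp Require Import all_boot zify.
Set Implicit Arguments. Unset Strict Implicit. Unset Printing Implicit Defensive.

Lemma card_bigcup_disj (T : finType) n (F : 'I_n -> {set T}) :
  (forall i j, i != j -> [disjoint F i & F j]) ->
  #|\bigcup_(i < n) F i| = \sum_(i < n) #|F i|.
Proof.
elim: n F => [|n IH] F dF; first by rewrite !big_ord0 cards0.
rewrite !big_ord_recr /=.
have d : [disjoint \bigcup_(i < n) F (widen_ord (leqnSn n) i) & F ord_max].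
  rewrite disjoint_sym; apply: bigcup_disjoint => i _; apply: dF.
  by rewrite neq_ltn /= ltn_ord orbT.
rewrite -IH; last first.
  move=> i j ij; apply: dF; apply: contra ij => /eqP[] e; apply/eqP/val_inj.
  exact: e.
by have := cardsUI (\bigcup_(i < n) F (widen_ord (leqnSn n) i)) (F ord_max);
  rewrite (disjoint_setI0 d) cards0 addn0.
Qed.

Lemma bigcupI (T : finType) n (F : 'I_n -> {set T}) P :
  (\bigcup_(i < n) F i) :&: P = \bigcup_(i < n) (F i :&: P).
Proof.
apply/setP => e; rewrite inE; apply/andP/bigcupP.
  by case=> /bigcupP [i _ he] hp; exists i => //; rewrite inE he.
by case=> i _; rewrite inE => /andP[he hp]; split => //; apply/bigcupP; exists i.
Qed.

Lemma disjI (T : finType) (A B P : {set T}) :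
  [disjoint A & B] -> [disjoint A :&: P & B :&: P].
Proof.
by move=> d; apply: (disjointWl (subsetIl _ _)); apply: (disjointWr (subsetIl _ _)).
Qed.

Definition deg v (C : {set {set 'I_v}}) (x : 'I_v) := #|C :&: [set e : {set 'I_v} | x \in e]|.

Lemma deg_K v (x : 'I_v) : deg (edgesK v) x = v.-1.
Proof.
rewrite /deg.
have -> : edgesK v :&: [set e : {set 'I_v} | x \in e] = [set [set x; y] | y in [set~ x]].
  apply/setP => e; rewrite !inE; apply/andP/imsetP.
  - case => /cards2P [p [q [pq ->]]] /set2P [->|->].
      by exists q; rewrite // !inE eq_sym.
    by exists p; rewrite ?inE // setUC.
  - case => y; rewrite !inE => yx ->; split; last by rewrite set21.
    by rewrite cards2 (eq_sym x) yx.
rewrite card_in_imset ?cardsC1 ?card_ord //.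
move=> y z; rewrite !inE => yx zx e.
have : y \in [set x; z] by rewrite -e set22.
by rewrite !inE (negbTE yx) => /eqP.
Qed.

Lemma cards3 (T : finType) (p q r : T) :
  p != q -> p != r -> q != r -> #|[set p; q; r]| = 3.
Proof.
move=> pq pr qr; rewrite setUC cardsU1 cards2 pq !inE.
by rewrite eq_sym (negbTE pr) eq_sym (negbTE qr).
Qed.

Lemma ordS_val h (i : 'I_h) : val (ordS i) = if i.+1 == h then 0 else i.+1.
Proof.
rewrite /=; case: eqP => [->|ne]; first by rewrite modnn.
rewrite modn_small //; have := ltn_ord i; lia.
Qed.

Lemma ordS_ne h (i : 'I_h) : 2 < h -> ordS i != i.
Proof.
move=> h3; apply/eqP => /(congr1 val); rewrite ordS_val.
have := ltn_ord i; case: eqP => ? /=; lia.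
Qed.
Lemma ordSS_ne h (i : 'I_h) : 2 < h -> ordS (ordS i) != i.
Proof.
move=> h3; apply/eqP => /(congr1 val); rewrite !ordS_val.
have := ltn_ord i; case: (i.+1 =P h) => ? /=; case: ifP => /eqP ? /=; lia.
Qed.


Section Sun.
Variables (h v : nat) (a b : 'I_h -> 'I_v).
Hypothesis h3 : 2 < h.
Hypothesis ok : sun_ok a b.

Lemma sun_edge_sub e : e \in sun_edges a b -> e \subset sun_vertices a b.
Proof.
rewrite inE => /orP[] /imsetP [i _ ->]; apply/subsetP => y; rewrite !inE;
  case/orP => /eqP ->; by rewrite ?imset_f ?orbT.
Qed.

Lemma sun_deg_a i :
  #|sun_edges a b :&: [set e : {set 'I_v} | a i \in e]| = 3.
Proof.
case: ok => ia [ib ab].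
have -> : sun_edges a b :&: [set e : {set 'I_v} | a i \in e] =
   [set [set a (ord_pred i); a i]; [set a i; a (ordS i)]; [set a i; b i]].
  apply/setP => e; rewrite !inE; apply/idP/idP.
  - case/andP => /orP[] /imsetP [j _ ->]; rewrite !inE => /orP[] /eqP /=.
    + by move/ia ->; rewrite eqxx orbT.
    + by move/ia ->; rewrite ordSK eqxx.
    + by move/ia ->; rewrite eqxx !orbT.
    + by move=> e'; move: (ab i j); rewrite e' eqxx.
  - case/orP => [/orP[]|] /eqP ->; rewrite !inE ?eqxx ?orbT ?andbT.
    + by apply/orP; left; apply/imsetP; exists (ord_pred i); rewrite ?ord_predK.
    + by apply/orP; left; apply/imsetP; exists i.
    + by apply/orP; right; apply/imsetP; exists i.
apply: cards3.
- apply/eqP => e; have : a (ord_pred i) \in [set a i; a (ordS i)] by rewrite -e set21.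
  rewrite !inE => /orP[] /eqP /ia e2.
  + by have := ordS_ne i h3; rewrite -{1}e2 ord_predK eqxx.
  + by have := ordSS_ne i h3; rewrite -e2 ord_predK eqxx.
- apply/eqP => e; have : b i \in [set a (ord_pred i); a i] by rewrite e set22.
  by rewrite !inE => /orP[] /eqP e2; [move: (ab (ord_pred i) i) | move: (ab i i)]; rewrite e2 eqxx.
- apply/eqP => e; have : b i \in [set a i; a (ordS i)] by rewrite e set22.
  by rewrite !inE => /orP[] /eqP e2; [move: (ab i i) | move: (ab (ordS i) i)]; rewrite e2 eqxx.
Qed.

Lemma sun_deg_b i :
  #|sun_edges a b :&: [set e : {set 'I_v} | b i \in e]| = 1.
Proof.
case: ok => ia [ib ab].
have -> : sun_edges a b :&: [set e : {set 'I_v} | b i \in e] = [set [set a i; b i]].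
  apply/setP => e; rewrite !inE; apply/idP/idP.
  - case/andP => /orP[] /imsetP [j _ ->]; rewrite !inE => /orP[] /eqP /=.
    + by move=> e'; move: (ab j i); rewrite e' eqxx.
    + by move=> e'; move: (ab (ordS j) i); rewrite e' eqxx.
    + by move=> e'; move: (ab j i); rewrite e' eqxx.
    + by move/ib ->.
  - move/eqP ->; rewrite !inE eqxx orbT andbT.
    by apply/orP; right; apply/imsetP; exists i.
by rewrite cards1.
Qed.
End Sun.

Definition cyc v (C : {set {set 'I_v}}) := [set x | deg C x == 3].

Lemma sun_factor_props h v (C : {set {set 'I_v}}) : 2 < h -> sun_factor h C ->
  [/\ #|cyc C|.*2 = v, 2 * h %| v & forall x, deg C x = (x \in cyc C).*2.+1].
Proof.
move=> h3 [k [a [b [ok [dis [cov ->]]]]]].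
set A := \bigcup_(l < k) [set a l i | i : 'I_h].
set B := \bigcup_(l < k) [set b l i | i : 'I_h].
have svA l : [set a l i | i : 'I_h] \subset sun_vertices (a l) (b l) := subsetUl _ _.
have svB l : [set b l i | i : 'I_h] \subset sun_vertices (a l) (b l) := subsetUr _ _.
have cA : #|A| = k * h.
  rewrite card_bigcup_disj; last first.
    by move=> l1 l2 /dis d; apply: (disjointWl (svA l1)); apply: (disjointWr (svA l2)).
  rewrite (eq_bigr (fun _ => h)) ?sum_nat_const ?card_ord //.
  by move=> l _; rewrite card_imset ?cardsT ?card_ord //; case: (ok l).
have cB : #|B| = k * h.
  rewrite card_bigcup_disj; last first.
    by move=> l1 l2 /dis d; apply: (disjointWl (svB l1)); apply: (disjointWr (svB l2)).
  rewrite (eq_bigr (fun _ => h)) ?sum_nat_const ?card_ord //.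
  by move=> l _; rewrite card_imset ?cardsT ?card_ord //; case: (ok l) => _ [].
have dAB : [disjoint A & B].
  apply/pred0P => x /=; apply/negP => /andP[/bigcupP[l1 _ /imsetP[i _ e1]] /bigcupP[l2 _ /imsetP[j _ e2]]].
  case: (eqVneq l1 l2) => [e|ne].
    by case: (ok l1) => _ [_ ab]; move: (ab i j); rewrite -e1 e e2 eqxx.
  have := disjointFr (dis _ _ ne) (subsetP (svA l1) _ (imset_f _ _ : a l1 i \in _)).
  have hb : b l2 j \in sun_vertices (a l2) (b l2) by rewrite /sun_vertices inE imset_f ?orbT.
  by rewrite -e1 e2 hb => /(_ isT).
have cov' : A :|: B = setT.
  apply/setP => x; rewrite !inE; have [l hl] := cov x; move: hl.
  rewrite /sun_vertices inE => /orP[] /imsetP[i _ ->].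
    by apply/orP; left; apply/bigcupP; exists l => //; apply: imset_f.
  by apply/orP; right; apply/bigcupP; exists l => //; apply: imset_f.
have hv : v = (k * h).*2.
  have := cardsUI A B.
  by rewrite cov' cardsT card_ord (disjoint_setI0 dAB) cards0 addn0 cA cB addnn.
have dg x : deg (\bigcup_(j < k) sun_edges (a j) (b j)) x = (x \in A).*2.+1.
  have [l0 hl0] := cov x.
  rewrite /deg bigcupI.
  have -> : \bigcup_(l < k) (sun_edges (a l) (b l) :&: [set e : {set 'I_v} | x \in e])
      = sun_edges (a l0) (b l0) :&: [set e : {set 'I_v} | x \in e].
    apply/setP => e; apply/bigcupP/idP => [[l _ he]|he]; last by exists l0.
    case: (eqVneq l l0) => [<- //|ne].
    move: he; rewrite inE => /andP[he]; rewrite inE => hx.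
    have := disjointFr (dis _ _ ne) (subsetP (sun_edge_sub he) _ hx).
    by rewrite hl0.
  move: hl0; rewrite /sun_vertices inE => /orP[] /imsetP[i _ ->].
    rewrite sun_deg_a //.
    suff -> : a l0 i \in A by [].
    by apply/bigcupP; exists l0 => //; apply: imset_f.
  rewrite sun_deg_b // (disjointFl dAB) //.
  by apply/bigcupP; exists l0 => //; apply: imset_f.
have cycA : cyc (\bigcup_(j < k) sun_edges (a j) (b j)) = A.
  by apply/setP => x; rewrite inE dg; case: (x \in A).
rewrite cycA; split => //.
- by rewrite cA hv.
- by apply/dvdnP; exists k; rewrite hv; lia.
Qed.

Lemma card_disjU (T : finType) (A B : {set T}) :
  [disjoint A & B] -> #|A :|: B| = #|A| + #|B|.
Proof. by move=> d; have := cardsUI A B; rewrite (disjoint_setI0 d) cards0 addn0. Qed.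

Lemma sum_mem (T : finType) (A : {set T}) : \sum_(x : T) (x \in A : nat) = #|A|.
Proof. by rewrite -sum1_card [RHS]big_mkcond; apply: eq_bigr => x _; case: (x \in A). Qed.

Theorem lemma2p1 (h v r s : nat) :
  3 <= h -> 0 < s -> URD h v r s ->
  v = 0 %[mod 2 * h] /\ s = 0 %[mod 2].
Proof.
move=> h3 s0 [F [S [hF [hS [F0 [S0 [dF [dS [dFS cover]]]]]]]]].
pose j0 : 'I_s := Ordinal s0.
have props j := sun_factor_props h3 (hS j).
have [_ hdv _] := props j0.
split; first by rewrite mod0n; apply/eqP.
have v0 : 0 < v.
  case/set0Pn: (S0 j0) => e he.
  have : e \in edgesK v by rewrite -cover inE; apply/orP; right; apply/bigcupP; exists j0.
  rewrite inE => /eqP c2; have := max_card e; rewrite c2 card_ord; lia.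
pose t x := \sum_(j < s) (x \in cyc (S j) : nat).
have key x : v.-1 = r + s + (t x).*2.
  rewrite -(deg_K x) -cover /deg setIUl !bigcupI card_disjU; last first.
    apply: bigcup_disjoint => j _; rewrite disjoint_sym; apply: bigcup_disjoint => i _.
    by rewrite disjoint_sym; apply: disjI; apply: dFS.
  rewrite !card_bigcup_disj; first last.
  - move=> i j ij; apply: disjI; exact: dF.
  - move=> i j ij; apply: disjI; exact: dS.
  rewrite (eq_bigr (fun _ => 1)); last first.
    move=> i _; case: (hF i) => _ /(_ x) <-; by apply: eq_card => e; rewrite !inE.
  rewrite sum_nat_const card_ord muln1 -addnA; congr (_ + _).
  rewrite (eq_bigr (fun j => 1 + (x \in cyc (S j)) * 2)); last first.
    by move=> j _; have [_ _ dd] := props j; move: (dd x); rewrite /deg => ->; rewrite -muln2 add1n.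
  by rewrite big_split /= sum_nat_const card_ord muln1 -big_distrl /= muln2.
have sumx : \sum_(x : 'I_v) v.-1 = \sum_(x : 'I_v) (r + s + (t x).*2).
  by apply: eq_bigr => x _; apply: key.
rewrite sum_nat_const card_ord big_split /= sum_nat_const card_ord in sumx.
have st : \sum_(x : 'I_v) (t x).*2 = s * v.
  rewrite (eq_bigr (fun x => t x * 2)); last by move=> x _; rewrite muln2.
  rewrite -big_distrl /= /t exchange_big /=.
  rewrite (eq_bigr (fun j => #|cyc (S j)|)); last by move=> j _; apply: sum_mem.
  rewrite big_distrl /= (eq_bigr (fun _ => v)); last first.
    by move=> j _; have [cc _ _] := props j; rewrite muln2 cc.
  by rewrite sum_nat_const card_ord.
rewrite st in sumx.
have e1 : v.-1 = r + s.*2.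
  apply/eqP; rewrite -(eqn_pmul2l v0) sumx; apply/eqP; lia.
have := key (Ordinal v0); rewrite e1 => e2.
lia.
Qed.
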